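(* Let $f(\mathbf z)$ be a weighted homogeneous polynomial in $\mathbf z=(z_1,\dots,z_n)$ with strictly positive weight vector $R=(r_1,\dots,r_n)$ and degree $d(R)>0$, which is non-degenerate, Łojasiewicz non-degenerate, has an isolated singularity at the origin, and satisfies $\dim\Gamma(f)=n-1$. Then $\ell_0(f)\le\eta(R)=d(R)/\min_ir_i-1$.
   Context: $f$ is weighted homogeneous with weight $R$ and degree $d(R)$ if every monomial $\mathbf z^\nu$ with non-zero coefficient satisfies $\sum_ir_i\nu_i=d(R)$. $\Gamma_+(g)$ is the convex hull of $\bigcup_{c_\nu\ne0}(\nu+\mathbb R_{\ge0}^n)$ for $g=\sum c_\nu\mathbf z^\nu$; $\Gamma(g)$ is the union of compact faces. For a weight $P$, $g_P$ is the sum of terms of $g$ whose exponents lie on the face of $\Gamma_+(g)$ where $\nu\mapsto\sum p_i\nu_i$ is minimal. $f$ is non-degenerate if for each strictly positive $P$, $f_P$ has no critical point in $(\mathbb C^* )^n$. $\ell_0(f)$ is the infimum of $\theta>0$ with $\|\partial f(\mathbf z)\|\ge c\|\mathbf z\|^\theta$ near $\mathbf 0$ for some $c>0$, $\partial f=(f_1,\dots,f_n)$, $f_i=\partial f/\partial z_i$. Łojasiewicz non-degeneracy: for $I\subset\{1,\dots,n\}$ with $f|_{\mathbb C^I}\equiv0$, where $\mathbb C^I=\{\mathbf z:z_k=0,\ k\notin I\}$ (a vanishing coordinate subspace), and $i\in I$, let $J_i$ be the set of $j\notin I$ such that some monomial $z_i^az_j$ ($a\ge1$) has a non-zero coefficient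 in $f$. $f$ is Łojasiewicz non-degenerate if for every vanishing coordinate subspace $\mathbb C^I$, every $P=(p_i)_{i\in I}$ with all $p_i>0$, and every $\mathbf a\in(\mathbb C^* )^I$, there is $j\in\bigcup_{i\in I'}J_i$, $I'=\{i\in I:p_i=\min_{k\in I}p_k\}$, with $((f_j)^I)_P(\mathbf a)\ne0$; here $(f_j)^I$ is the restriction of $f_j$ to $\mathbb C^I$ as a polynomial in $(z_i)_{i\in I}$ and $(\cdot)_P$ its face function with respect to $P$. *)

(* Defs.v *)
From HB Require Import structures.
From mathcomp Require Import all_boot all_order all_algebra.
From mathcomp Require Import mpoly.
From mathcomp Require Import all_classical all_reals all_analysis.
From mathcomp Require Import complex.
Set Implicit Arguments. Unset Strict Implicit. Unset Printing Implicit Defensive.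
Import Order.TTheory GRing.Theory Num.Theory.
Import numFieldNormedType.Exports.
Local Open Scope classical_set_scope.
Local Open Scope ring_scope.

Section Defs.
Variables (R : realType) (n : nat).
Local Notation C := (R[i]).
Local Notation poly := (mpoly.mpoly n C).
Local Notation mnm := (mpoly.multinom n).

Definition cvec_norm (z : 'I_n -> C) : R :=
  Num.sqrt (\sum_(i < n) ((complex.Re (z i)) ^+ 2 + (complex.Im (z i)) ^+ 2)).

Definition grad_at (f : poly) (z : 'I_n -> C) : 'I_n -> C :=
  fun i => mpoly.meval z (mpoly.mderiv i f).
Definition gnorm (f : poly) (z : 'I_n -> C) : R := cvec_norm (grad_at f z).

Definition weighted_homogeneous (r : 'I_n -> R) (d : R) (f : poly) : Prop :=
  forall m : mnm, m \in mpoly.msupp f -> \sum_(i < n) r i * ((m i)%:R) = d.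

(* min_i r_i (for n >= 1; the seed max_i r_i does not change the min) *)
Definition min_weight_r (r : 'I_n -> R) : R :=
  \big[Num.min/ \big[Num.max/0]_(i < n) r i]_(i < n) r i.

Definition expv (m : mnm) : 'rV[R]_n := \row_(i < n) ((m i)%:R).
Definition dotw (P : 'I_n -> R) (x : 'rV[R]_n) : R := \sum_(i < n) P i * x ord0 i.

Definition conv_hull (S : set 'rV[R]_n) : set 'rV[R]_n :=
  [set x | exists k (w : 'I_k -> R) (p : 'I_k -> 'rV[R]_n),
     [/\ (forall j, 0 <= w j), \sum_(j < k) w j = 1, (forall j, S (p j))
       & x = \sum_(j < k) w j *: p j]].

Definition newton_Gamma_plus (g : poly) : set 'rV[R]_n :=
  conv_hull [set x | exists2 m : mnm, m \in mpoly.msupp g &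
                 forall i, (m i)%:R <= x ord0 i].

Definition newton_face (S : set 'rV[R]_n) (P : 'I_n -> R) : set 'rV[R]_n :=
  [set x | S x /\ forall y, S y -> dotw P x <= dotw P y].

Definition newton_is_face (S F : set 'rV[R]_n) : Prop := exists P, F = newton_face S P.

Definition newton_Gamma (g : poly) : set 'rV[R]_n :=
  [set x | exists F, [/\ newton_is_face (newton_Gamma_plus g) F, compact F & F x]].

Definition affdim_ge (S : set 'rV[R]_n) (k : nat) : Prop :=
  exists p : 'I_k.+1 -> 'rV[R]_n, (forall j, S (p j)) /\
    row_free (\matrix_(j < k) (p (lift ord0 j) - p ord0)).

Definition affdim_eq (S : set 'rV[R]_n) (k : nat) : Prop :=
  affdim_ge S k /\ ~ affdim_ge S k.+1.

Definition newton_face_fun (g : poly) (P : 'I_n -> R) : poly :=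
  \sum_(m <- mpoly.msupp g | `[< newton_face (newton_Gamma_plus g) P (expv m) >])
     mpoly.mcoeff m g *: mpoly.mpolyX C m.

Definition newton_nondegenerate (f : poly) : Prop :=
  forall P : 'I_n -> R, (forall i, 0 < P i) ->
    ~ exists z : 'I_n -> C, (forall i, z i != 0) /\
        forall i, mpoly.meval z (mpoly.mderiv i (newton_face_fun f P)) = 0.

Definition isolated_sing_at0 (f : poly) : Prop :=
  (forall i, grad_at f (fun _ => 0) i = 0) /\
  exists e : R, 0 < e /\ forall z, 0 < cvec_norm z < e -> exists i, grad_at f z i != 0.

Definition vanishes_on_coord (I : {set 'I_n}) (f : poly) : Prop :=
  forall z : 'I_n -> C, (forall k, k \notin I -> z k = 0) -> mpoly.meval z f = 0.

Definition coord_restr (I : {set 'I_n}) (g : poly) : poly :=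
  \sum_(m <- mpoly.msupp g | [forall k, (k \notin I) ==> (m k == 0%N)])
     mpoly.mcoeff m g *: mpoly.mpolyX C m.

Definition J_set (f : poly) (I : {set 'I_n}) (i j : 'I_n) : Prop :=
  j \notin I /\ exists2 m : mnm, m \in mpoly.msupp f &
    [/\ (1 <= m i)%N, m j = 1%N & forall k, k != i -> k != j -> m k = 0%N].

Definition loj_nondegenerate (f : poly) : Prop :=
  forall I : {set 'I_n}, I != finset.set0 -> vanishes_on_coord I f ->
  forall P : 'I_n -> R, (forall i, i \in I -> 0 < P i) ->
  forall a : 'I_n -> C, (forall i, i \in I -> a i != 0) ->
  exists j : 'I_n,
    (exists i, [/\ i \in I, (forall k, k \in I -> P i <= P k) & J_set f I i j]) /\
    mpoly.meval a (newton_face_fun (coord_restr I (mpoly.mderiv j f))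
                            (fun k => if k \in I then P k else 0)) != 0.

Definition loj_set (f : poly) : set R :=
  [set theta | 0 < theta /\ exists c : R, 0 < c /\ exists delta : R, 0 < delta /\
     forall z, cvec_norm z < delta -> c * (cvec_norm z `^ theta) <= gnorm f z].

Definition ell0_loj (f : poly) : \bar R := ereal_inf (EFin @` loj_set f).

End Defs.

(* Main.v *)
Require Import Defs.
From HB Require Import structures.
From mathcomp Require Import all_boot all_order all_algebra.
From mathcomp Require Import mpoly.
From mathcomp Require Import all_classical all_reals all_analysis.
From mathcomp Require Import complex.
From mathcomp Require Import ring lra.
Set Implicit Arguments. Unset Strict Implicit. Unset Printing Implicit Defensive.
Import Order.TTheory GRing.Theory Num.Theory.
Import numFieldNormedType.Exports.
Local Open Scope classical_set_scope.
Local Open Scope ring_scope.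

Section T.
Variables (R : realType) (n : nat).
Local Notation C := (R[i]).
Local Notation X := ('rV[R]_n * 'rV[R]_n)%type.
Definition toC (x : X) : 'I_n -> C := fun i => Complex (x.1 ord0 i) (x.2 ord0 i).

Definition RC (h : X -> C) := continuous (fun x => complex.Re (h x)) /\ continuous (fun x => complex.Im (h x)).

Lemma RC_coord i : RC (fun x => toC x i).
Proof.
split => /= x.
- apply: (@continuous_comp _ _ _ fst (fun M : 'rV[R]_n => M ord0 i)).
  exact: cvg_fst. exact: coord_continuous.
- apply: (@continuous_comp _ _ _ snd (fun M : 'rV[R]_n => M ord0 i)).
  exact: cvg_snd. exact: coord_continuous.
Qed.

Lemma RC_cst c : RC (fun=> c).
Proof. split => x; exact: cst_continuous. Qed.

Lemma RC_add h g : RC h -> RC g -> RC (fun x => h x + g x).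
Proof.
move=> [h1 h2] [g1 g2]; split => x.
- have -> : (fun x => complex.Re (h x + g x)) = (fun x => complex.Re (h x) + complex.Re (g x)).
    by apply: funext => y; case: (h y) => ??; case: (g y).
  exact: (continuousD (h1 x) (g1 x)).
- have -> : (fun x => complex.Im (h x + g x)) = (fun x => complex.Im (h x) + complex.Im (g x)).
    by apply: funext => y; case: (h y) => ??; case: (g y).
  exact: (continuousD (h2 x) (g2 x)).
Qed.

Lemma RC_mul h g : RC h -> RC g -> RC (fun x => h x * g x).
Proof.
move=> [h1 h2] [g1 g2]; split => x.
- have -> : (fun x => complex.Re (h x * g x)) = (fun x => complex.Re (h x) * complex.Re (g x) - complex.Im (h x) * complex.Im (g x)).
    by apply: funext => y; case: (h y) => ??; case: (g y).
  exact: (continuousB (continuousM (h1 x) (g1 x)) (continuousM (h2 x) (g2 x))).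
- have -> : (fun x => complex.Im (h x * g x)) = (fun x => complex.Re (h x) * complex.Im (g x) + complex.Im (h x) * complex.Re (g x)).
    by apply: funext => y; case: (h y) => ??; case: (g y).
  exact: (continuousD (continuousM (h1 x) (g2 x)) (continuousM (h2 x) (g1 x))).
Qed.

Lemma RC_sum (I : Type) (s : seq I) (F : I -> X -> C) :
  (forall i, RC (F i)) -> RC (fun x => \sum_(i <- s) F i x).
Proof.
move=> HF; elim: s => [|a s IH].
  have -> : (fun x : X => \sum_(i <- [::]) F i x) = fun=> 0 by apply: funext => x; rewrite big_nil.
  exact: RC_cst.
have -> : (fun x : X => \sum_(i <- a :: s) F i x) = fun x => F a x + \sum_(i <- s) F i x.
  by apply: funext => x; rewrite big_cons.
exact: RC_add.
Qed.

Lemma RC_prod (I : Type) (s : seq I) (F : I -> X -> C) :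
  (forall i, RC (F i)) -> RC (fun x => \prod_(i <- s) F i x).
Proof.
move=> HF; elim: s => [|a s IH].
  have -> : (fun x : X => \prod_(i <- [::]) F i x) = fun=> 1 by apply: funext => x; rewrite big_nil.
  exact: RC_cst.
have -> : (fun x : X => \prod_(i <- a :: s) F i x) = fun x => F a x * \prod_(i <- s) F i x.
  by apply: funext => x; rewrite big_cons.
exact: RC_mul.
Qed.

Lemma RC_exp h k : RC h -> RC (fun x => h x ^+ k).
Proof.
move=> Hh; elim: k => [|k IH].
  have -> : (fun x : X => h x ^+ 0) = fun=> 1 by apply: funext => x; rewrite expr0.
  exact: RC_cst.
have -> : (fun x : X => h x ^+ k.+1) = fun x => h x * h x ^+ k.
  by apply: funext => x; rewrite exprS.
exact: RC_mul.
Qed.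

Lemma RC_meval (p : mpoly.mpoly n C) : RC (fun x => mpoly.meval (toC x) p).
Proof.
have -> : (fun x => mpoly.meval (toC x) p) =
  fun x => \sum_(m <- mpoly.msupp p) (mpoly.mcoeff m p * \prod_(i <- index_enum 'I_n) toC x i ^+ m i).
  by apply: funext => x; rewrite mpoly.mevalE.
apply: RC_sum => m; apply: RC_mul; first exact: RC_cst.
apply: RC_prod => i; apply: RC_exp; exact: RC_coord.
Qed.

Definition a2 (z : C) : R := complex.Re z ^+ 2 + complex.Im z ^+ 2.

Lemma RC_a2 h : RC h -> continuous (fun x => a2 (h x)).
Proof.
move=> [h1 h2] x; rewrite /a2.
exact: (continuousD (continuousM (h1 x) (h1 x)) (continuousM (h2 x) (h2 x))).
Qed.

Lemma cont_prod (I : Type) (s : seq I) (F : I -> X -> R) :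
  (forall i, continuous (F i)) -> continuous (fun x => \prod_(i <- s) F i x).
Proof.
move=> HF; elim: s => [|a s IH].
  have -> : (fun x : X => \prod_(i <- [::]) F i x) = fun=> 1 by apply: funext => x; rewrite big_nil.
  exact: cst_continuous.
have -> : (fun x : X => \prod_(i <- a :: s) F i x) = fun x => F a x * \prod_(i <- s) F i x.
  by apply: funext => x; rewrite big_cons.
move=> x; exact: (continuousM (HF a x) (IH x)).
Qed.

Definition Kset : set X := [set x | (forall i, a2 (toC x i) <= 1) /\
   \prod_(i < n) (1 - a2 (toC x i)) = 0].

Lemma Kset_closed : closed Kset.
Proof.
have -> : Kset = (\bigcap_(i in setT) [set x | a2 (toC x i) <= 1]) `&`
   [set x | \prod_(i < n) (1 - a2 (toC x i)) = 0].
  apply/seteqP; split => x /= [H1 H2]; split => // i.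
    by move=> _; exact: H1.
  exact: H1.
apply: closedI.
  apply: closed_bigI => i _.
  apply: (@preimage_closed _ _ (fun x => a2 (toC x i)) [set y | y <= 1]).
    by move=> x _; apply: RC_a2; exact: RC_coord.
  exact: closed_le.
apply: (@preimage_closed _ _ (fun x => \prod_(i < n) (1 - a2 (toC x i))) [set y | y = 0]).
  move=> x _; apply: cont_prod => i y.
  have h1 := (@cst_continuous X R 1 y).
  have h2 := (@RC_a2 _ (RC_coord i) y).
  exact: (continuousB h1 h2).
exact: closed_eq.
Qed.


Lemma cont_sum (I : Type) (s : seq I) (F : I -> X -> R) :
  (forall i, continuous (F i)) -> continuous (fun x => \sum_(i <- s) F i x).
Proof.
move=> HF; elim: s => [|a s IH].
  have -> : (fun x : X => \sum_(i <- [::]) F i x) = fun=> 0 by apply: funext => x; rewrite big_nil.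
  exact: cst_continuous.
have -> : (fun x : X => \sum_(i <- a :: s) F i x) = fun x => F a x + \sum_(i <- s) F i x.
  by apply: funext => x; rewrite big_cons.
move=> x; exact: (continuousD (@HF a x) (@IH x)).
Qed.

Lemma sq_le1 (a : R) : a ^+ 2 <= 1 -> -1 <= a <= 1.
Proof. move=> h; apply/andP; split; nra. Qed.

Lemma Kset_compact : compact Kset.
Proof.
pose B := [set v : 'rV[R]_n | forall i, (fun=> `[-1, 1]%classic) i (v ord0 i)].
have cB : compact B by apply: rV_compact => i; exact: segment_compact.
apply: (subclosed_compact Kset_closed (compact_setX cB cB)).
move=> x [H1 _]; split => i /=; have := H1 i; rewrite /a2 /toC /= => h;
  rewrite in_itv /=; apply: sq_le1.
- have : 0 <= x.2 ord0 i ^+ 2 by exact: sqr_ge0. lra.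
- have : 0 <= x.1 ord0 i ^+ 2 by exact: sqr_ge0. lra.
Qed.

Lemma EVT_K (G : X -> R) : (0 < n)%N -> continuous G ->
  exists2 c, Kset c & forall x, Kset x -> G c <= G x.
Proof.
move=> n0 cG.
have K0 : Kset !=set0.
  pose i0 : 'I_n := Ordinal n0.
  exists (\row_j (if j == i0 then 1 else 0), 0); split.
    move=> i; rewrite /a2 /toC /= !mxE; case: ifP => _; rewrite ?expr0n ?expr1n /=; lra.
  rewrite (bigD1 i0) //= /a2 /toC /= !mxE eqxx expr1n expr0n /= addr0 subrr mul0r //.
have [c cK Hc] := compact_EVT_min K0 Kset_compact (continuous_subspaceT cG).
exists c; first by move: cK; rewrite inE.
by move=> x Kx; apply: Hc; rewrite inE.
Qed.

End T.

Section A.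
Variables (R : realType) (n : nat).
Local Notation C := (R[i]).
Local Notation rc := (real_complex R).
Local Notation poly := (mpoly.mpoly n C).

Definition sc (r : 'I_n -> R) (t : R) (z : 'I_n -> C) : 'I_n -> C :=
  fun i => rc (t `^ r i) * z i.

Lemma powR_prod (t : R) (I : Type) (s : seq I) (b : I -> R) : 0 < t ->
  \prod_(i <- s) t `^ b i = t `^ (\sum_(i <- s) b i).
Proof.
move=> t0; elim: s => [|a s IH]; first by rewrite !big_nil powRr0.
rewrite !big_cons IH powRD //; apply/implyP => _; exact: lt0r_neq0.
Qed.

Lemma homog_eval (r : 'I_n -> R) (e t : R) (g : poly) (z : 'I_n -> C) :
  0 < t -> weighted_homogeneous r e g ->
  mpoly.meval (sc r t z) g = rc (t `^ e) * mpoly.meval z g.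
Proof.
move=> t0 Hg; rewrite !mpoly.mevalE mulr_sumr; apply: eq_big_seq => m Hm.
rewrite mulrCA; congr (_ * _).
under eq_bigr => i _ do rewrite /sc exprMn.
rewrite big_split /=; congr (_ * _).
under eq_bigr => i _ do rewrite -rmorphXn.
rewrite -rmorph_prod; congr rc.
under eq_bigr => i _ do rewrite -powR_mulrn ?powR_ge0 // -powRrM.
by rewrite powR_prod // (Hg m Hm).
Qed.

Lemma homog_deriv (r : 'I_n -> R) (e : R) (g : poly) i :
  weighted_homogeneous r e g -> weighted_homogeneous r (e - r i) (mpoly.mderiv i g).
Proof.
move=> Hg m; rewrite mpoly.mcoeff_msupp mpoly.mcoeff_deriv => Hm.
have : (m + mpoly.mnm1 i)%MM \in mpoly.msupp g.
  rewrite mpoly.mcoeff_msupp; apply: contraNneq Hm => ->; by rewrite mul0rn.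
move/Hg; under eq_bigr => j _ do rewrite mpoly.mnmDE mpoly.mnm1E natrD mulrDr.
rewrite big_split /= => <-.
have -> : \sum_(j < n) r j * ((i == j) : nat)%:R = r i.
  rewrite (bigD1 i) //= eqxx mulr1 big1 ?addr0 // => j.
  by rewrite eq_sym => /negbTE ->; rewrite mulr0.
by rewrite addrK.
Qed.
End A.

Section B.
Variables (R : realType) (n : nat).
Local Notation C := (R[i]).
Local Notation rc := (real_complex R).
Local Notation poly := (mpoly.mpoly n C).

Lemma a2_ge0 (z : C) : 0 <= a2 z.
Proof. by rewrite /a2 addr_ge0 // sqr_ge0. Qed.

Lemma a2_rcM (x : R) (z : C) : a2 (rc x * z) = x ^+ 2 * a2 z.
Proof. case: z => a b; rewrite /a2 /=; ring. Qed.

Lemma a2_eq0 (z : C) : a2 z = 0 -> z = 0.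
Proof.
case: z => a b; rewrite /a2 /= => h.
have ha : a = 0 by apply/eqP; rewrite -sqrf_eq0; apply/eqP; have := sqr_ge0 b; have := sqr_ge0 a; lra.
have hb : b = 0 by apply/eqP; rewrite -sqrf_eq0; apply/eqP; have := sqr_ge0 b; have := sqr_ge0 a; lra.
by rewrite ha hb.
Qed.

Lemma a2_gt0 (z : C) : z != 0 -> 0 < a2 z.
Proof.
move=> z0; rewrite lt_neqAle a2_ge0 andbT eq_sym; apply/eqP => /a2_eq0 h.
by rewrite h eqxx in z0.
Qed.

Lemma a2_le_sum (z : 'I_n -> C) i : a2 (z i) <= \sum_(j < n) a2 (z j).
Proof.
rewrite (bigD1 i) //= lerDl; apply: sumr_ge0 => j _; exact: a2_ge0.
Qed.

Variable (r : 'I_n -> R).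
Hypothesis rpos : forall i, 0 < r i.
Hypothesis n0 : (0 < n)%N.
Local Notation rm := (min_weight_r r).

Lemma rm_le i : rm <= r i.
Proof. exact: bigmin_le. Qed.

Lemma rm_gt0 : 0 < rm.
Proof.
apply/bigmin_gtP; split; last by move=> i _; exact: rpos.
apply: (lt_le_trans (rpos (Ordinal n0))); exact: le_bigmax.
Qed.

Lemma powR_le1 (u p : R) : 0 <= u <= 1 -> 0 <= p -> u `^ p <= 1.
Proof.
move=> /andP[u0 u1] p0; rewrite [leRHS](_ : _ = 1 `^ p); last by rewrite powR1.
apply: ge0_ler_powR => //;
  rewrite nnegrE //.
Qed.

Lemma bound_sc (t : R) (w : 'I_n -> C) : 0 < t <= 1 -> (forall i, a2 (w i) <= 1) ->
  cvec_norm (sc r t w) <= Num.sqrt (n%:R) * t `^ rm.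
Proof.
move=> /andP[t0 t1] hw; rewrite /cvec_norm.
have -> : Num.sqrt n%:R * t `^ rm = Num.sqrt (\sum_(i < n) (t `^ rm) ^+ 2).
  rewrite sumr_const card_ord -(mulr_natr ((t `^ rm) ^+ 2)) sqrtrM ?sqr_ge0 // sqrtr_sqr ger0_norm ?powR_ge0 //.
  by rewrite mulrC.
apply: ler_wsqrtr; apply: ler_sum => i _.
have -> : complex.Re (sc r t w i) ^+ 2 + complex.Im (sc r t w i) ^+ 2 = a2 (sc r t w i) by [].
rewrite /sc a2_rcM.
have h1 : t `^ r i <= t `^ rm by apply: ger_powR; [rewrite t0 t1 | exact: rm_le].
have h2 : 0 <= t `^ r i by exact: powR_ge0.
have h3 := hw i; have h4 := a2_ge0 (w i).
nra.
Qed.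

Variables (f : poly) (d : R).
Hypothesis Hf : weighted_homogeneous r d f.

Lemma grad_sc t w i : 0 < t ->
  grad_at f (sc r t w) i = rc (t `^ (d - r i)) * grad_at f w i.
Proof. by move=> t0; rewrite /grad_at (homog_eval _ t0 (homog_deriv (i:=i) Hf)). Qed.

Lemma sqrtn_ge1 : 1 <= Num.sqrt (n%:R : R).
Proof. rewrite -[leLHS]sqrtr1 ler_wsqrtr // ler1n; exact: n0. Qed.

Lemma nonvanish w : (forall i, a2 (w i) <= 1) -> (exists i, a2 (w i) = 1) ->
  isolated_sing_at0 f -> exists i, grad_at f w i != 0.
Proof.
move=> hw [i1 hi1] [_ [e [e0 He]]].
have sN1 := sqrtn_ge1.
set sN := Num.sqrt (n%:R : R) in sN1 *.
set u := Num.min 1 (e / (sN + 1)).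
have u0 : 0 < u by rewrite lt_min ltr01 divr_gt0 //; lra.
have u1 : u <= 1 by rewrite ge_min lexx.
have ue : u <= e / (sN + 1) by rewrite ge_min lexx orbT.
set s := u `^ rm^-1.
have s0 : 0 < s by exact: powR_gt0.
have s1 : s <= 1 by apply: powR_le1; [rewrite (ltW u0) u1 | rewrite invr_ge0 ltW // rm_gt0].
have srm : s `^ rm = u.
  by rewrite /s -powRrM mulVf ?gt_eqF ?rm_gt0 // powRr1 // ltW.
have [|i hi] := He (sc r s w).
  apply/andP; split.
    rewrite /cvec_norm sqrtr_gt0; apply: (lt_le_trans _ (a2_le_sum _ i1)).
    rewrite /sc a2_rcM hi1 mulr1 exprn_gt0 //; exact: powR_gt0.
  apply: (le_lt_trans (bound_sc _ hw)); first by rewrite s0 s1.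
  rewrite srm -/sN.
  have : u * (sN + 1) <= e by rewrite -ler_pdivlMr //; lra.
  nra.
exists i; apply: contraNneq hi; rewrite grad_sc // => ->; by rewrite mulr0.
Qed.

Lemma meval_const (g : poly) v1 v2 :
  (forall m, m \in mpoly.msupp g -> forall j, m j = 0%N) ->
  mpoly.meval v1 g = mpoly.meval v2 g.
Proof.
move=> H; rewrite !mpoly.mevalE; apply: eq_big_seq => m hm; congr (_ * _).
by apply: eq_bigr => j _; rewrite (H m hm j) !expr0.
Qed.

Lemma d_gt_rm : isolated_sing_at0 f -> rm < d.
Proof.
move=> Hiso.
pose i0 : 'I_n := Ordinal n0.
pose w : 'I_n -> C := fun j => if j == i0 then 1 else 0.
have [|||i hi] := @nonvanish w.
- by move=> j; rewrite /w; case: ifP => _; rewrite /a2 /= ?expr1n ?expr0n /=; lra.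
- by exists i0; rewrite /w eqxx /a2 /= expr1n expr0n /= addr0.
- exact: Hiso.
have Hd := homog_deriv (i:=i) Hf.
suff : rm <= d - r i by have := rpos i; lra.
rewrite leNgt; apply/negP => hlt.
case: Hiso => [H0 _]; move: (H0 i); rewrite /grad_at.
rewrite (@meval_const _ _ w) => [h|m hm j]; first by rewrite /grad_at h eqxx in hi.
apply/eqP; rewrite -leqn0 leqNgt; apply/negP => hj.
have := Hd m hm; rewrite (bigD1 j) //= => hs.
have : r j * (m j)%:R <= d - r i.
  rewrite -hs lerDl; apply: sumr_ge0 => k _; apply: mulr_ge0; [exact: ltW | exact: ler0n].
have : r j <= r j * (m j)%:R by rewrite ler_peMr ?ler1n // ltW.
have := rm_le j. lra.
Qed.


Lemma a2_real_complex (z : C) : Complex (complex.Re z) (complex.Im z) = z.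
Proof. by case: z. Qed.

Lemma main_ineq : isolated_sing_at0 f ->
  exists2 c : R, 0 < c & forall z, cvec_norm z < 1 ->
    c * (cvec_norm z `^ (d / rm - 1)) <= Defs.gnorm f z.
Proof.
move=> Hiso.
set th := d / rm - 1.
have rm0 := rm_gt0.
have dgt := d_gt_rm Hiso.
have th0 : 0 < th by rewrite /th subr_gt0 ltr_pdivlMr // mul1r.
have rmth : rm * th = d - rm by rewrite /th mulrBr mulr1 mulrCA divff ?mulr1 // gt_eqF.
pose G (x : ('rV[R]_n * 'rV[R]_n)%type) := \sum_(i <- index_enum 'I_n) a2 (grad_at f (toC x) i).
have cG : continuous G.
  apply: cont_sum => i; apply: RC_a2; exact: RC_meval.
have [c0 Kc0 Hc0] := EVT_K n0 cG.
set m2 := G c0.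
have m20 : 0 < m2.
  case: Kc0 => [H1 H2].
  have [j hj] : exists j, a2 (toC c0 j) = 1.
    move/eqP: H2; rewrite prodf_seq_eq0 => /hasP [j _ /= /eqP hj].
    by exists j; lra.
  have [i hi] := nonvanish H1 (ex_intro _ j hj) Hiso.
  apply: (lt_le_trans (a2_gt0 hi)); exact: (a2_le_sum (grad_at f (toC c0))).
have sN1 := sqrtn_ge1.
set sN := Num.sqrt (n%:R : R) in sN1 *.
have sNth : 0 < sN `^ th by apply: powR_gt0; lra.
exists (Num.sqrt m2 / sN `^ th); first by rewrite divr_gt0 // sqrtr_gt0.
move=> z hz.
have [hz0|hzpos] := eqVneq (cvec_norm z) 0.
  rewrite hz0 powR0 ?gt_eqF // mulr0; exact: sqrtr_ge0.
have [i1 hi1] : exists i, 0 < a2 (z i).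
  apply/existsP; apply: contraNT hzpos; rewrite negb_exists => /forallP hall.
  rewrite /cvec_norm big1 ?sqrtr0 // => i _.
  have := hall i; have := a2_ge0 (z i); rewrite /a2; lra.
pose b i := a2 (z i) `^ (2 * r i)^-1.
have b0 i : 0 <= b i by exact: powR_ge0.
have [i0 _ ht] := @eq_bigmax _ _ _ 0 i1 predT b isT (fun i _ => b0 i).
set t := \big[Num.max/0]_(i | predT i) b i in ht.
have bt i : b i <= t by exact: le_bigmax.
have t0 : 0 < t by apply: (lt_le_trans _ (bt i1)); exact: powR_gt0.
have sum1 : \sum_(j < n) a2 (z j) < 1.
  move: hz; rewrite /cvec_norm -[X in _ < X]sqrtr1 ltr_sqrt //; lra.
have t1 : t <= 1.
  rewrite ht; apply: powR_le1; last by rewrite invr_ge0 mulr_ge0 // ltW.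
  rewrite a2_ge0 /=; have := a2_le_sum z i0; lra.
have bK i : b i `^ (2 * r i) = a2 (z i).
  rewrite /b -powRrM mulVf ?powRr1 ?a2_ge0 // gt_eqF // mulr_gt0 //.
have tK i : t `^ (2 * r i) = (t `^ r i) ^+ 2.
  by rewrite mulrC powRrM powR_mulrn // powR_ge0.
have az i : a2 (z i) <= (t `^ r i) ^+ 2.
  rewrite -bK -tK; apply: ge0_ler_powR; rewrite ?nnegrE ?mulr_ge0 // ?ltW //.
have az0 : a2 (z i0) = (t `^ r i0) ^+ 2 by rewrite -tK ht bK.
have tr0 i : 0 < t `^ r i by exact: powR_gt0.
pose w : 'I_n -> C := fun i => rc ((t `^ r i)^-1) * z i.
have zw : sc r t w = z.
  apply: funext => i; rewrite /sc /w mulrA -rmorphM divff ?rmorph1 ?mul1r //.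
  exact: lt0r_neq0.
have aw i : a2 (w i) = (t `^ r i)^-2 * a2 (z i) by rewrite /w a2_rcM exprVn.
pose x0 : ('rV[R]_n * 'rV[R]_n)%type := (\row_i complex.Re (w i), \row_i complex.Im (w i)).
have tx0 : toC x0 = w.
  by apply: funext => i; rewrite /toC /x0 /= !mxE a2_real_complex.
have Kx0 : Kset x0.
  rewrite /Kset /= tx0; split.
    move=> i; rewrite aw -exprVn; have := tr0 i => hp.
    rewrite -(ler_pM2l (exprn_gt0 2 hp)) mulr1 mulrA -exprMn divff ?expr1n ?mul1r ?az //.
    exact: lt0r_neq0.
  rewrite (bigD1 i0) //= aw az0 -exprVn -exprMn mulVf ?expr1n ?subrr ?mul0r //.
  exact: lt0r_neq0.
have Gx0 := Hc0 _ Kx0.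
have hg : t `^ (d - rm) * Num.sqrt m2 <= Defs.gnorm f z.
  rewrite /Defs.gnorm /cvec_norm -zw.
  have -> : t `^ (d - rm) = Num.sqrt ((t `^ (d - rm)) ^+ 2) by rewrite sqrtr_sqr ger0_norm // powR_ge0.
  rewrite -sqrtrM ?sqr_ge0 //; apply: ler_wsqrtr.
  apply: (le_trans (y := (t `^ (d - rm)) ^+ 2 * G x0)).
    by apply: ler_wpM2l; [exact: sqr_ge0 | exact: Gx0].
  rewrite /G tx0 mulr_sumr; apply: ler_sum => i _.
  have -> : complex.Re (grad_at f (sc r t w) i) ^+ 2 + complex.Im (grad_at f (sc r t w) i) ^+ 2
     = a2 (grad_at f (sc r t w) i) by [].
  rewrite grad_sc // a2_rcM; apply: ler_wpM2r; first exact: a2_ge0.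
  have h1 : t `^ (d - rm) <= t `^ (d - r i).
    by apply: ger_powR; [rewrite t0 t1 | have := rm_le i; lra].
  have h2 : 0 <= t `^ (d - rm) by exact: powR_ge0.
  nra.
have hn : cvec_norm z `^ th <= sN `^ th * t `^ (d - rm).
  rewrite -rmth powRrM -powRM ?powR_ge0 ?(ltW (lt_le_trans ltr01 sN1)) //.
  apply: ge0_ler_powR; rewrite ?nnegrE.
  - exact: ltW.
  - exact: sqrtr_ge0.
  - by rewrite mulr_ge0 ?powR_ge0 //; lra.
  rewrite -{1}zw; apply: bound_sc; first by rewrite t0 t1.
  move=> i; rewrite aw -exprVn; have := tr0 i => hp.
  rewrite -(ler_pM2l (exprn_gt0 2 hp)) mulr1 mulrA -exprMn divff ?expr1n ?mul1r ?az //.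
  exact: lt0r_neq0.
apply: (le_trans _ hg).
rewrite -(ler_pM2l sNth) mulrA mulrCA divff ?mulr1 ?gt_eqF //.
have hs := sqrtr_ge0 m2.
nra.
Qed.

End B.

Local Close Scope classical_set_scope.

Theorem theorem19 (R : realType) (n : nat) (f : mpoly.mpoly n R[i])
    (r : 'I_n -> R) (d : R) :
  (forall i, 0 < r i) -> 0 < d ->
  weighted_homogeneous r d f ->
  newton_nondegenerate f ->
  loj_nondegenerate f ->
  isolated_sing_at0 f ->
  affdim_eq (newton_Gamma f) n.-1 ->
  (ell0_loj f <= (d / min_weight_r r - 1)%:E)%E.
Proof.
move=> rpos d0 Hf Hnd _ Hiso _.
have n0 : (0 < n)%N.
  rewrite lt0n; apply/negP => /eqP n_0.
  apply: (Hnd (fun=> 1)) => [i|]; first exact: ltr01.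
  exists (fun=> 0); split => i; exfalso; by case: i => m; rewrite n_0.
have [c c0 Hc] := main_ineq rpos n0 Hf Hiso.
have rm0 := rm_gt0 rpos n0.
have dgt := d_gt_rm rpos n0 Hf Hiso.
have th0 : 0 < d / min_weight_r r - 1 by rewrite subr_gt0 ltr_pdivlMr // mul1r.
rewrite /ell0_loj; apply: ereal_inf_lbound.
exists (d / min_weight_r r - 1) => //; split => //.
exists c; split => //; exists 1; split => //; exact: ltr01.
Qed.
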